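(* For every first-order insertion query $\rho$ over the graph schema $\{E\}$ there is a constant $m\in\mathbb N$ such that for every undirected graph $G$, every change $\delta=\rho(\bar a)$ and all nodes $u,v$ of $G$ that are connected in $\delta(G)$, the bridge distance satisfies $\mathrm{bd}(u,v)\le m$.
   Context: A first-order insertion query $\rho(\bar p)$ for graphs is a rule $E := E(x,y)\lor\varphi(\bar p;x,y)$ with $\varphi$ first-order over $\{E\}$; the change $\delta=\rho(\bar a)$ maps a graph $G$ to the graph $\delta(G)$ with edge set $\{(b,c): G\models E(b,c)\lor\varphi(\bar a;b,c)\}$. For undirected graphs, modifications are symmetric: whenever an edge $(b,c)$ is inserted, so is $(c,b)$. For nodes $u,v$ connected in $\delta(G)$, the bridge distance $\mathrm{bd}(u,v)$ is the minimal number $d$ such that there is a path from $u$ to $v$ in $\delta(G)$ using exactly $d$ edges that are not edges of $G$ (newly inserted edges, called bridges). *)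

(* Defs.v *)
From mathcomp Require Import all_boot.
Set Implicit Arguments. Unset Strict Implicit. Unset Printing Implicit Defensive.

Inductive fo : Type :=
  | FTrue
  | FEdge of nat & nat
  | FEq of nat & nat
  | FNot of fo
  | FAnd of fo & fo
  | FOr of fo & fo
  | FEx of nat & fo
  | FAll of nat & fo.

Fixpoint fo_free (f : fo) (i : nat) : bool :=
  match f with
  | FTrue => false
  | FEdge a b => (i == a) || (i == b)
  | FEq a b => (i == a) || (i == b)
  | FNot g => fo_free g i
  | FAnd g h | FOr g h => fo_free g i || fo_free h i
  | FEx j g | FAll j g => (i != j) && fo_free g i
  end.

Definition upd (T : Type) (env : nat -> T) (j : nat) (t : T) : nat -> T :=
  fun i => if i == j then t else env i.

Fixpoint fo_sat (T : finType) (E : rel T) (env : nat -> T) (f : fo) : bool :=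
  match f with
  | FTrue => true
  | FEdge a b => E (env a) (env b)
  | FEq a b => env a == env b
  | FNot g => ~~ fo_sat E env g
  | FAnd g h => fo_sat E env g && fo_sat E env h
  | FOr g h => fo_sat E env g || fo_sat E env h
  | FEx j g => [exists t : T, fo_sat E (upd env j t) g]
  | FAll j g => [forall t : T, fo_sat E (upd env j t) g]
  end.

(* A first-order insertion query rho(p_1..p_k) : E := E(x,y) \/ phi(p;x,y).
   Convention: variable 0 is x, variable 1 is y, variable (2+i) is p_(i+1). *)
Record ins_query : Type := InsQuery {
  iq_arity : nat;
  iq_phi : fo;
  iq_wf : forall i, fo_free iq_phi i -> i < iq_arity.+2
}.

Definition iq_holds (T : finType) (E : rel T) (rho : ins_query)
    (a : seq T) (b c : T) : bool :=
  fo_sat E (fun i => nth b [:: b, c & a] i) (iq_phi rho).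

Definition undirected (T : finType) (E : rel T) : Prop :=
  forall b c, E b c = E c b.

(* The change delta = rho(a) applied to an undirected graph: modifications are
   symmetric, so (b,c) and (c,b) are inserted whenever either satisfies phi. *)
Definition apply_change (T : finType) (E : rel T) (rho : ins_query)
    (a : seq T) : rel T :=
  fun b c => [|| E b c, iq_holds E rho a b c | iq_holds E rho a c b].

(* Number of bridges (edges of delta(G) not in G) used along the walk
   u = x_0, x_1, ..., x_n (p = [:: x_1; ...; x_n]). *)
Fixpoint nbridges (T : Type) (E : rel T) (x : T) (p : seq T) : nat :=
  match p with
  | [::] => 0
  | y :: q => (~~ E x y) + nbridges E y q
  end.

Definition bridge_path (T : finType) (E E' : rel T) (u v : T) (d : nat) : Prop :=
  exists p : seq T, [/\ path E' u p, last u p = v & nbridges E u p = d].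

Definition bd_le (T : finType) (E E' : rel T) (u v : T) (m : nat) : Prop :=
  exists2 d, d <= m & bridge_path E E' u v d.

(* Main.v *)
Require Import Defs.
From mathcomp Require Import all_boot.
From Stdlib Require Import ClassicalEpsilon.
From mathcomp Require Import zify.
Set Implicit Arguments. Unset Strict Implicit. Unset Printing Implicit Defensive.

Fixpoint qr (f : fo) : nat :=
  match f with
  | FNot g => qr g
  | FAnd g h | FOr g h => maxn (qr g) (qr h)
  | FEx _ g | FAll _ g => (qr g).+1
  | _ => 0
  end.

Fixpoint vb (f : fo) : nat :=
  match f with
  | FTrue => 0
  | FEdge a b | FEq a b => (maxn a b).+1
  | FNot g => vb g
  | FAnd g h | FOr g h => maxn (vb g) (vb h)
  | FEx j g | FAll j g => maxn j.+1 (vb g)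
  end.

Section Types.
Variable n : nat.
Definition tp0T : finType := ({ffun 'I_n -> bool} * {ffun 'I_n * 'I_n -> bool} * {ffun 'I_n * 'I_n -> bool})%type.
Fixpoint clsT (q : nat) : finType :=
  match q with 0 => tp0T | q'.+1 => (tp0T * {ffun 'I_n -> {set clsT q'}})%type end.

Definition hd0 (q : nat) : clsT q -> tp0T :=
  match q return clsT q -> tp0T with 0 => fun c => c | q'.+1 => fun c => c.1 end.

Variables (T : finType) (E : rel T).

Definition tp0 (A : {set T}) (e : nat -> T) : tp0T :=
  ([ffun i : 'I_n => e i \in A],
   [ffun ij : 'I_n * 'I_n => (e ij.1 \in A) && (e ij.2 \in A) && E (e ij.1) (e ij.2)],
   [ffun ij : 'I_n * 'I_n => (e ij.1 \in A) && (e ij.2 \in A) && (e ij.1 == e ij.2)]).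

Fixpoint cls (q : nat) (A : {set T}) (e : nat -> T) : clsT q :=
  match q return clsT q with
  | 0 => tp0 A e
  | q'.+1 => (tp0 A e, [ffun j : 'I_n => [set cls q' A (upd e j t) | t : T]])
  end.

Lemma hd0_cls q A e : hd0 (cls q A e) = tp0 A e.
Proof. by case: q. Qed.

Definition mask_eq (A : {set T}) (e e' : nat -> T) :=
  forall i, i < n -> (e i \in A) = (e' i \in A) /\ (e i \in A -> e i = e' i).

Lemma mask_upd A e e' j t : mask_eq A e e' -> mask_eq A (upd e j t) (upd e' j t).
Proof. by move=> H i /H; rewrite /upd; case: (i == j). Qed.

Lemma tp0_mask A e e' : mask_eq A e e' -> tp0 A e = tp0 A e'.
Proof.
move=> H; congr (_, _, _); apply/ffunP.
- by move=> i; rewrite !ffunE; case: (H i (ltn_ord i)).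
- case=> i j; rewrite !ffunE /=.
  case: (H i (ltn_ord i)) => H1 H2; case: (H j (ltn_ord j)) => H3 H4.
  rewrite -H1 -H3; case Hi: (e i \in A) => //; case Hj: (e j \in A) => //.
  by rewrite H2 // H4.
- case=> i j; rewrite !ffunE /=.
  case: (H i (ltn_ord i)) => H1 H2; case: (H j (ltn_ord j)) => H3 H4.
  rewrite -H1 -H3; case Hi: (e i \in A) => //; case Hj: (e j \in A) => //.
  by rewrite H2 // H4.
Qed.

Lemma cls_mask q A e e' : mask_eq A e e' -> cls q A e = cls q A e'.
Proof.
elim: q e e' => [|q IH] e e' H /=; first exact: tp0_mask.
rewrite (tp0_mask H); congr (_, _); apply/ffunP => j; rewrite !ffunE.
by apply: eq_imset => t; apply: IH; apply: mask_upd.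
Qed.

Lemma cls_mem q A B e e' i : cls q A e = cls q B e' -> i < n ->
  (e i \in A) = (e' i \in B).
Proof.
move=> /(congr1 (@hd0 q)); rewrite !hd0_cls => /(congr1 (fun x => x.1.1)) /= H hi.
by move/ffunP: H => /(_ (Ordinal hi)); rewrite !ffunE.
Qed.

Lemma cls_ex q A B e e' j : cls q.+1 A e = cls q.+1 B e' -> j < n ->
  forall t, exists t', cls q B (upd e' j t') = cls q A (upd e j t).
Proof.
move=> /(congr1 (fun x => x.2)) /= /ffunP /(_ (Ordinal _)) H hj t.
move: (H j hj); rewrite !ffunE /= => Hs.
have : cls q A (upd e j t) \in [set cls q A (upd e j t0) | t0 : T] by apply: imset_f.
by rewrite Hs => /imsetP [t' _ ->]; exists t'.
Qed.

Lemma cls_out q A B e e' j t t' : cls q.+1 A e = cls q.+1 B e' -> j < n ->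
  t \notin A -> t' \notin B -> cls q A (upd e j t) = cls q B (upd e' j t').
Proof.
move=> H hj tA tB; case: (cls_ex H hj t) => t3 H3.
have t3B : t3 \notin B.
  by move: (cls_mem H3 hj); rewrite /upd eqxx => ->.
rewrite -H3; apply: cls_mask => i _; rewrite /upd; case: (i == j) => //.
by rewrite (negbTE t3B) (negbTE tB).
Qed.


Section Comp.
Variables (K K' : {set T}).
Hypothesis cK : forall x y, E x y -> (x \in K) = (y \in K).
Hypothesis cK' : forall x y, E x y -> (x \in K') = (y \in K').
Hypothesis dK : forall x, x \in K -> x \notin K'.

Definition Cq q (e1 e2 : nat -> T) :=
  [/\ forall i, i < n -> [/\ (e1 i \in K) = (e2 i \in K'), (e1 i \in K') = (e2 i \in K)
         & (e1 i \notin K -> e1 i \notin K' -> e1 i = e2 i)],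
      cls q K e1 = cls q K' e2 & cls q K' e1 = cls q K e2].

End Comp.

Lemma Cq_swap (K K' : {set T}) q e1 e2 : Cq K K' q e1 e2 -> Cq K' K q e1 e2.
Proof.
case=> H1 H2 H3; split=> // i /H1 [a b c]; split=> // x y.
by apply: c.
Qed.

Lemma forth_in (K K' : {set T}) (dK : forall x, x \in K -> x \notin K') q e1 e2 j t1 :
  Cq K K' q.+1 e1 e2 -> j < n -> t1 \in K ->
  exists t2, Cq K K' q (upd e1 j t1) (upd e2 j t2).
Proof.
case=> H1 H2 H3 hj t1K.
case: (cls_ex H2 hj t1) => t2 E2.
have t2K' : t2 \in K' by move: (cls_mem E2 hj); rewrite /upd eqxx => ->.
have t1K' : t1 \notin K' by apply: dK.
have t2K : t2 \notin K.
  by apply/negP => /dK; rewrite t2K'.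
exists t2; split.
- move=> i hi; rewrite /upd; case: (i == j); last exact: H1.
  by rewrite t1K t2K' (negbTE t1K') (negbTE t2K).
- by rewrite E2.
- exact: cls_out.
Qed.

Lemma forth (K K' : {set T}) (dK : forall x, x \in K -> x \notin K') q e1 e2 j t1 :
  Cq K K' q.+1 e1 e2 -> j < n ->
  exists t2, Cq K K' q (upd e1 j t1) (upd e2 j t2).
Proof.
move=> HC hj.
have dK' : forall x, x \in K' -> x \notin K.
  by move=> x xK'; apply/negP => /dK; rewrite xK'.
case t1K: (t1 \in K); first exact: forth_in.
case t1K': (t1 \in K').
  case: (forth_in dK' (Cq_swap HC) hj t1K') => t2 H; exists t2; exact: Cq_swap.
case: HC => H1 H2 H3; exists t1; split.
- move=> i hi; rewrite /upd; case: (i == j); last exact: H1.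
  by rewrite t1K t1K'.
- by apply: cls_out => //; rewrite ?t1K ?t1K'.
- by apply: cls_out => //; rewrite ?t1K ?t1K'.
Qed.

Lemma Cq_sym (K K' : {set T}) q e1 e2 : Cq K K' q e1 e2 -> Cq K' K q e2 e1.
Proof.
case=> H1 H2 H3; split=> //.
move=> i /H1 [a b c]; split=> //.
move=> x y; symmetry; apply: c; by rewrite ?b ?a.
Qed.


Lemma atom_core (K K' : {set T}) (R : rel T)
  (cK : forall x y, R x y -> (x \in K) = (y \in K))
  (cK' : forall x y, R x y -> (x \in K') = (y \in K'))
  (x1 y1 x2 y2 : T) :
  (x1 \in K) = (x2 \in K') -> (x1 \in K') = (x2 \in K) ->
  (x1 \notin K -> x1 \notin K' -> x1 = x2) ->
  (y1 \in K) = (y2 \in K') -> (y1 \in K') = (y2 \in K) ->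
  (y1 \notin K -> y1 \notin K' -> y1 = y2) ->
  (x1 \in K) && (y1 \in K) && R x1 y1 = (x2 \in K') && (y2 \in K') && R x2 y2 ->
  (x1 \in K') && (y1 \in K') && R x1 y1 = (x2 \in K) && (y2 \in K) && R x2 y2 ->
  R x1 y1 = R x2 y2.
Proof.
move=> a1 a2 a3 b1 b2 b3 h1 h2.
case xK: (x1 \in K); case yK: (y1 \in K).
- by move: h1; rewrite xK yK -a1 -b1 xK yK.
- apply/idP/idP => [/cK|/cK']; first by rewrite xK yK.
  by rewrite -a1 -b1 xK yK.
- apply/idP/idP => [/cK|/cK']; first by rewrite xK yK.
  by rewrite -a1 -b1 xK yK.
case xK': (x1 \in K'); case yK': (y1 \in K').
- by move: h2; rewrite xK' yK' -a2 -b2 xK' yK'.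
- apply/idP/idP => [/cK'|/cK]; first by rewrite xK' yK'.
  by rewrite -a2 -b2 xK' yK'.
- apply/idP/idP => [/cK'|/cK]; first by rewrite xK' yK'.
  by rewrite -a2 -b2 xK' yK'.
by rewrite -a3 ?xK ?xK' // -b3 ?yK ?yK'.
Qed.

Section Sound.
Variables (K K' : {set T}).
Hypothesis cK : forall x y, E x y -> (x \in K) = (y \in K).
Hypothesis cK' : forall x y, E x y -> (x \in K') = (y \in K').
Hypothesis dK : forall x, x \in K -> x \notin K'.

Lemma tp0_ent q A B e e' a b (ha : a < n) (hb : b < n) :
  cls q A e = cls q B e' ->
  ((e a \in A) && (e b \in A) && E (e a) (e b) =
   (e' a \in B) && (e' b \in B) && E (e' a) (e' b)) /\
  ((e a \in A) && (e b \in A) && (e a == e b) =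
   (e' a \in B) && (e' b \in B) && (e' a == e' b)).
Proof.
move=> /(congr1 (@hd0 q)); rewrite !hd0_cls /tp0 => [[_ H1 H2]].
move/ffunP: H1 => /(_ (Ordinal ha, Ordinal hb)); rewrite !ffunE /= => ->.
by move/ffunP: H2 => /(_ (Ordinal ha, Ordinal hb)); rewrite !ffunE /= => ->.
Qed.

Lemma sound f : vb f <= n -> forall q, qr f <= q -> forall e1 e2,
  Cq K K' q e1 e2 -> fo_sat E e1 f = fo_sat E e2 f.
Proof.
elim: f => [|a b|a b|g IH|g IHg h IHh|g IHg h IHh|j g IH|j g IH] /= hv q hq e1 e2 HC.
- by [].
- case: HC => H1 H2 H3.
  have ha : a < n by apply: leq_trans hv; rewrite ltnS leq_maxl.
  have hb : b < n by apply: leq_trans hv; rewrite ltnS leq_maxr.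
  case: (H1 a ha) => a1 a2 a3; case: (H1 b hb) => b1 b2 b3.
  case: (tp0_ent ha hb H2) => t1 _; case: (tp0_ent ha hb H3) => t2 _.
  exact: (atom_core cK cK' a1 a2 a3 b1 b2 b3 t1 t2).
- case: HC => H1 H2 H3.
  have ha : a < n by apply: leq_trans hv; rewrite ltnS leq_maxl.
  have hb : b < n by apply: leq_trans hv; rewrite ltnS leq_maxr.
  case: (H1 a ha) => a1 a2 a3; case: (H1 b hb) => b1 b2 b3.
  case: (tp0_ent ha hb H2) => _ t1; case: (tp0_ent ha hb H3) => _ t2.
  have ceq : forall (A : {set T}) x y, x == y -> (x \in A) = (y \in A).
    by move=> A x y /eqP ->.
  exact: (atom_core (R := fun x y => x == y) (ceq K) (ceq K') a1 a2 a3 b1 b2 b3 t1 t2).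
- by rewrite (IH hv q hq e1 e2 HC).
- rewrite geq_max in hv; rewrite geq_max in hq.
  case/andP: hv => hv1 hv2; case/andP: hq => hq1 hq2.
  by rewrite (IHg hv1 q hq1 e1 e2 HC) (IHh hv2 q hq2 e1 e2 HC).
- rewrite geq_max in hv; rewrite geq_max in hq.
  case/andP: hv => hv1 hv2; case/andP: hq => hq1 hq2.
  by rewrite (IHg hv1 q hq1 e1 e2 HC) (IHh hv2 q hq2 e1 e2 HC).
- rewrite geq_max in hv; case/andP: hv => hj hv.
  case: q hq HC => [|q] // hq HC.
  have dK' : forall x, x \in K' -> x \notin K.
    by move=> x xK'; apply/negP => /dK; rewrite xK'.
  apply/existsP/existsP => [[t1 Ht1]|[t2 Ht2]].
  + case: (forth dK t1 HC hj) => t2 HC'; exists t2.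
    by rewrite -(IH hv q hq _ _ HC').
  + case: (forth dK' t2 (Cq_sym HC) hj) => t1 HC'; exists t1.
    by rewrite (IH hv q hq _ _ (Cq_sym HC')).
- rewrite geq_max in hv; case/andP: hv => hj hv.
  case: q hq HC => [|q] // hq HC.
  have dK' : forall x, x \in K' -> x \notin K.
    by move=> x xK'; apply/negP => /dK; rewrite xK'.
  apply/forallP/forallP => [Ha t2|Ha t1].
  + case: (forth dK' t2 (Cq_sym HC) hj) => t1 HC'.
    by rewrite -(IH hv q hq _ _ (Cq_sym HC')).
  + case: (forth dK t1 HC hj) => t2 HC'.
    by rewrite (IH hv q hq _ _ HC').
Qed.

End Sound.

End Types.

Definition bb (P : Prop) : bool := if excluded_middle_informative P then true else false.
Lemma bbP (P : Prop) : reflect P (bb P).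
Proof. rewrite /bb; case: excluded_middle_informative => h; by constructor. Qed.

Lemma nbridges_rcons (T : Type) (E : rel T) x p z :
  nbridges E x (rcons p z) = nbridges E x p + ~~ E (last x p) z.
Proof. elim: p x => [|y p IH] x /=; first by rewrite addn0. by rewrite IH addnA. Qed.

Section Graph.
Variables (T : finType) (E : rel T) (rho : ins_query) (a : seq T) (u : T).
Hypothesis Esym : undirected E.
Let d := apply_change E rho a.

Lemma dsym b c : d b c = d c b.
Proof. by rewrite /d /apply_change Esym orbCA orbC orbA. Qed.

Lemma Esub b c : E b c -> d b c.
Proof. by rewrite /d /apply_change => ->. Qed.

Definition Pd (w : T) (k : nat) : bool := ~~ connect d u w || bb (bridge_path E d u w k).

Lemma Pd_ex w : exists k, Pd w k.
Proof.
rewrite /Pd; case: (boolP (connect d u w)) => //= [/connectP [p pp ->]|]; last by exists 0.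
by exists (nbridges E u p); apply/bbP; exists p.
Qed.

Definition D w := ex_minn (Pd_ex w).

Lemma D_spec w : connect d u w ->
  bridge_path E d u w (D w) /\ forall k, bridge_path E d u w k -> D w <= k.
Proof.
move=> cw; rewrite /D; case: ex_minnP => m; rewrite /Pd cw /= => /bbP Hm Hmin.
split=> // k Hk; apply: Hmin; exact/bbP.
Qed.

Lemma D_u : D u = 0.
Proof.
have [_ H] := D_spec (connect0 d u).
by apply/eqP; rewrite -leqn0; apply: H; exists [::].
Qed.

Lemma D_step w z : connect d u w -> d w z ->
  connect d u z /\ D z <= D w + ~~ E w z.
Proof.
move=> cw dwz.
have cz : connect d u z by apply: connect_trans cw (connect1 dwz).
split=> //; have [[p [pp lp np]] _] := D_spec cw.
have [_ H] := D_spec cz; apply: H; exists (rcons p z); split.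
- by rewrite rcons_path pp lp.
- by rewrite last_rcons.
- by rewrite nbridges_rcons lp np.
Qed.

Lemma D_E w z : connect d u w -> E w z -> connect d u z /\ D z = D w.
Proof.
move=> cw Ewz.
have [cz H1] := D_step cw (Esub Ewz).
have Ezw : E z w by rewrite Esym.
have [_ H2] := D_step cz (Esub Ezw).
rewrite Ewz addn0 in H1; rewrite Ezw addn0 in H2.
by split=> //; apply/eqP; rewrite eqn_leq H1 H2.
Qed.

Lemma D_comp y z : connect E y z -> connect d u y -> connect d u z /\ D z = D y.
Proof.
move=> /connectP [p pp ->]; elim: p y pp => [|w p IH] y //= /andP [Eyw pw] cy.
have [cw Dw] := D_E cy Eyw.
by have [? ->] := IH w pw cw.
Qed.

Lemma layer k : forall p x, connect d u x -> path d x p -> D x < k <= D (last x p) ->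
  exists x' y', [/\ D x' = k.-1, D y' = k, d x' y', ~~ E x' y' & connect d u x' /\ connect d u y'].
Proof.
elim=> [|y p IH] x cx /=; first by move=> _ /andP [h1 h2]; move: (leq_trans h1 h2); rewrite ltnn.
case/andP => dxy py /andP [h1 h2].
have [cy Dy] := D_step cx dxy.
case: (leqP k (D y)) => hk.
  exists x, y; move: Dy; case: (E x y) => /= Dy.
  - by rewrite addn0 in Dy; move: (leq_ltn_trans hk (leq_ltn_trans Dy h1)); rewrite ltnn.
  - by split => //; lia.
by apply: (IH y cy py); rewrite hk h2.
Qed.


Lemma nthA (x y y' : T) i :
  (nth x [:: x, y & a] i = y /\ nth x [:: x, y' & a] i = y') \/
  (nth x [:: x, y & a] i = nth x [:: x, y' & a] i /\
   (nth x [:: x, y & a] i = x \/ nth x [:: x, y & a] i \in a)).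
Proof.
case: i => [|[|i]] /=; [by right; split=> //; left | by left |].
right; split=> //; case: (ltnP i (size a)) => hi; first by right; apply: mem_nth.
by left; apply: nth_default.
Qed.

Lemma nthB (x y y' : T) i :
  (nth y [:: y, x & a] i = y /\ nth y' [:: y', x & a] i = y') \/
  (nth y [:: y, x & a] i = nth y' [:: y', x & a] i /\
   (nth y [:: y, x & a] i = x \/ nth y [:: y, x & a] i \in a)).
Proof.
case: i => [|[|i]] /=; [by left | by right; split=> //; left |].
case: (ltnP i (size a)) => hi; first by right; split; [apply: set_nth_default | right; apply: mem_nth].
by left; rewrite !nth_default.
Qed.

Lemma nthC (x x' y : T) i :
  nth x [:: x, y & a] i = nth x' [:: x', y & a] i \/
  (nth x [:: x, y & a] i = x /\ nth x' [:: x', y & a] i = x').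
Proof.
case: i => [|[|i]] /=; [by right | by left |].
case: (ltnP i (size a)) => hi; first by left; apply: set_nth_default.
by right; rewrite !nth_default.
Qed.

Lemma nthD (x x' y : T) i :
  nth y [:: y, x & a] i = nth y [:: y, x' & a] i \/
  (nth y [:: y, x & a] i = x /\ nth y [:: y, x' & a] i = x').
Proof. by case: i => [|[|i]] /=; [left | right | left]. Qed.

Definition gcomp (y : T) : {set T} := [set z | connect E y z].

Lemma comp_closed y x z : E x z -> (x \in gcomp y) = (z \in gcomp y).
Proof.
move=> Exz; rewrite !inE; apply/idP/idP => h; apply: connect_trans h (connect1 _) => //.
by rewrite Esym.
Qed.

Lemma comp_D y z : connect d u y -> z \in gcomp y -> D z = D y.
Proof. by move=> cy; rewrite inE => /D_comp /(_ cy) [_ ->]. Qed.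

Lemma mask_gen n (A : {set T}) (e e' : nat -> T) :
  (forall i, e i = e' i \/ (e i \notin A /\ e' i \notin A)) -> mask_eq n A e e'.
Proof.
move=> H i _; case: (H i) => [->|[h1 h2]] //.
by rewrite (negbTE h1) (negbTE h2).
Qed.

Lemma patt n (K K' : {set T}) (e1 e2 : nat -> T) y y' :
  y \in K -> y' \in K' -> y \notin K' -> y' \notin K ->
  (forall i, (e1 i = y /\ e2 i = y') \/ (e1 i = e2 i /\ e1 i \notin K /\ e1 i \notin K')) ->
  forall i, i < n -> [/\ (e1 i \in K) = (e2 i \in K'), (e1 i \in K') = (e2 i \in K)
         & (e1 i \notin K -> e1 i \notin K' -> e1 i = e2 i)].
Proof.
move=> yK y'K' yK' y'K H i _; case: (H i) => [[-> ->]|[-> [h1 h2]]].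
- by rewrite yK y'K' (negbTE yK') (negbTE y'K); split.
- by rewrite (negbTE h1) (negbTE h2).
Qed.

Lemma ar1 k : 0 < k -> k.-1 = k -> False. Proof. lia. Qed.
Lemma ar2 k1 k2 : 0 < k1 -> k1 < k2 -> k1.-1 = k2 -> False. Proof. lia. Qed.
Lemma ar4 k1 k2 (b : bool) : 0 < k1 -> k1 < k2 -> k2 <= k1.-1 + b -> False. Proof. case: b => /=; lia. Qed.

Lemma shortcut n q k1 k2 x1 y1 x2 y2 :
  vb (iq_phi rho) <= n -> qr (iq_phi rho) <= q ->
  0 < k1 -> k1 < k2 -> D x1 = k1.-1 -> D y1 = k1 -> D x2 = k2.-1 -> D y2 = k2 ->
  d x1 y1 -> ~~ E x1 y1 ->
  connect d u x1 -> connect d u y1 -> connect d u x2 -> connect d u y2 ->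
  k1 \notin map D a -> k2 \notin map D a ->
  cls n E q (gcomp y1) (fun i => nth x1 [:: x1, y1 & a] i) =
    cls n E q (gcomp y2) (fun i => nth x2 [:: x2, y2 & a] i) ->
  cls n E q (gcomp y1) (fun i => nth y1 [:: y1, x1 & a] i) =
    cls n E q (gcomp y2) (fun i => nth y2 [:: y2, x2 & a] i) ->
  cls n E q (gcomp y1) (fun _ => x1) = cls n E q (gcomp y2) (fun _ => x2) ->
  False.
Proof.
move=> hv hq k1p k12 Dx1 Dy1 Dx2 Dy2 dxy nE cx1 cy1 cx2 cy2 k1a k2a K1 K2 K3.
set C1 := gcomp y1; set C2 := gcomp y2.
have inC1 z : z \in C1 -> D z = k1 by move=> /(comp_D cy1); rewrite Dy1.
have inC2 z : z \in C2 -> D z = k2 by move=> /(comp_D cy2); rewrite Dy2.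
have k2p : 0 < k2 by apply: leq_trans k12.
have x1C1 : x1 \notin C1 by apply/negP => /inC1; rewrite Dx1; apply: ar1.
have x1C2 : x1 \notin C2 by apply/negP => /inC2; rewrite Dx1; apply: ar2.
have x2C2 : x2 \notin C2 by apply/negP => /inC2; rewrite Dx2; apply: ar1.
have y1C1 : y1 \in C1 by rewrite inE connect0.
have y2C2 : y2 \in C2 by rewrite inE connect0.
have dK z : z \in C1 -> z \notin C2.
  by move=> /inC1 h1; apply/negP => /inC2; rewrite h1 => h; move: k12; rewrite h ltnn.
have y1C2 : y1 \notin C2 by apply: dK.
have y2C1 : y2 \notin C1 by apply/negP => /dK; rewrite y2C2.
have aC1 z : z \in a -> z \notin C1.
  move=> za; apply/negP => /inC1 h; move: k1a; rewrite -h.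
  by rewrite (map_f D za).
have aC2 z : z \in a -> z \notin C2.
  move=> za; apply/negP => /inC2 h; move: k2a; rewrite -h.
  by rewrite (map_f D za).
have cK := @comp_closed y1; have cK' := @comp_closed y2.
have fin : d x1 y2 -> False.
  move=> dx; have [_ h] := D_step cx1 dx; move: h; rewrite Dx1 Dy2; exact: ar4.
apply: fin; move: dxy; rewrite /d /apply_change (negbTE nE) /= => /orP [hA|hB].
-
  have HC : Cq n E C1 C2 q (fun i => nth x1 [:: x1, y1 & a] i) (fun i => nth x1 [:: x1, y2 & a] i).
    split.
    + apply: (patt y1C1 y2C2 y1C2 y2C1) => i.
      case: (nthA x1 y1 y2 i) => [h|[h1 h2]]; first by left.
      right; split=> //; case: h2 => [->|/[dup] h /aC1 ->]; first by split.
      by rewrite aC2.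
    + rewrite K1; apply: cls_mask; apply: mask_gen => i.
      case: (nthC x2 x1 y2 i) => [->|[-> ->]]; first by left.
      by right; split.
    + transitivity (cls n E q C2 (fun _ => x2)).
        apply: cls_mask; apply: mask_gen => i; right; split=> //.
        by case: (nthA x1 y1 y1 i) => [[-> _]|[_ [->|/aC2]]].
      rewrite -K3; apply: cls_mask; apply: mask_gen => i; right; split=> //.
      by case: (nthA x1 y2 y2 i) => [[-> _]|[_ [->|/aC1]]].
  have := sound cK cK' dK hv hq HC; rewrite -/(iq_holds E rho a x1 y1) hA.
  by move=> h; rewrite /apply_change /iq_holds -h orbT.
-
  have HC : Cq n E C1 C2 q (fun i => nth y1 [:: y1, x1 & a] i) (fun i => nth y2 [:: y2, x1 & a] i).
    split.
    + apply: (patt y1C1 y2C2 y1C2 y2C1) => i.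
      case: (nthB x1 y1 y2 i) => [h|[h1 h2]]; first by left.
      right; split=> //; case: h2 => [->|/[dup] h /aC1 ->]; first by split.
      by rewrite aC2.
    + rewrite K2; apply: cls_mask; apply: mask_gen => i.
      case: (nthD x2 x1 y2 i) => [->|[-> ->]]; first by left.
      by right; split.
    + transitivity (cls n E q C2 (fun _ => x2)).
        apply: cls_mask; apply: mask_gen => i; right; split=> //.
        by case: (nthB x1 y1 y1 i) => [[-> _]|[_ [->|/aC2]]].
      rewrite -K3; apply: cls_mask; apply: mask_gen => i; right; split=> //.
      by case: (nthB x1 y2 y2 i) => [[-> _]|[_ [->|/aC1]]].
  have := sound cK cK' dK hv hq HC; rewrite -/(iq_holds E rho a y1 x1) hB.
  by move=> h; rewrite /apply_change /iq_holds -h !orbT.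
Qed.

End Graph.

Lemma size_goods (s : seq nat) (b : seq nat) N :
  N - size b <= size [seq k <- iota 1 N | k \notin b].
Proof.
have h1 := count_predC (mem b) (iota 1 N).
have h2 : count (mem b) (iota 1 N) <= size b.
  rewrite -size_filter; apply: uniq_leq_size; first by apply: filter_uniq; apply: iota_uniq.
  by move=> x; rewrite mem_filter => /andP [].
rewrite size_filter size_iota in h1 *.
have -> : count (fun k => k \notin b) (iota 1 N) = count (predC (mem b)) (iota 1 N) by [].
lia.
Qed.

Theorem lemma4p2 :
  forall rho : ins_query, exists m : nat,
    forall (T : finType) (E : rel T), undirected E ->
    forall a : seq T, size a = iq_arity rho ->
    forall u v : T, connect (apply_change E rho a) u v ->
      bd_le E (apply_change E rho a) u v m.
Proof.
move=> rho.
pose n := vb (iq_phi rho); pose q := qr (iq_phi rho).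
pose keyT : finType := (clsT n q * clsT n q * clsT n q)%type.
exists (iq_arity rho + #|keyT|).
move=> T E Esym a Ha u v cuv.
have [bp _] := D_spec cuv.
pose D' := D E rho a u.
suff : D' v <= iq_arity rho + #|keyT| by move=> h; exists (D' v).
rewrite leqNgt; apply/negP => Hlt.
pose dl := apply_change E rho a.
pose wit k := [pick xy : T * T | [&& D' xy.1 == k.-1, D' xy.2 == k, dl xy.1 xy.2,
   ~~ E xy.1 xy.2, connect dl u xy.1 & connect dl u xy.2]].
pose key k := let xy := odflt (u, u) (wit k) in
  (cls n E q (gcomp E xy.2) (fun i => nth xy.1 [:: xy.1, xy.2 & a] i),
   cls n E q (gcomp E xy.2) (fun i => nth xy.2 [:: xy.2, xy.1 & a] i),
   cls n E q (gcomp E xy.2) (fun _ => xy.1)).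
pose Gs := [seq k <- iota 1 (D' v) | k \notin map D' a].
have goodw : forall k, k \in Gs -> exists x y, wit k = Some (x, y) /\
   [/\ D' x = k.-1, D' y = k, dl x y, ~~ E x y & connect dl u x /\ connect dl u y].
  move=> k; rewrite mem_filter mem_iota => /andP [ka /andP [k1 k2]].
  case/connectP: cuv => p pp lp.
  have [x' [y' [h1 h2 h3 h4 [h5 h6]]]] : exists x' y', [/\ D' x' = k.-1, D' y' = k, dl x' y', ~~ E x' y' & connect dl u x' /\ connect dl u y'].
    apply: (layer (p := p) (connect0 _ u) pp).
    rewrite -lp /D' D_u k1 /=; move: k2; rewrite /D'; lia.
  rewrite /wit; case: pickP => [[x y] /= /and5P [g1 g2 g3 g4 /andP [g5 g6]]|none].
    by exists x, y; split=> //; split=> //; apply/eqP.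
  by move: (none (x', y')) => /=; rewrite h1 h2 h3 h4 h5 h6 !eqxx.
have sG : #|keyT| < size Gs.
  have := size_goods [::] (map D' a) (D' v); rewrite size_map Ha -/Gs => h.
  move: Hlt h; clear. move=> Hlt h. lia.
have nu : ~~ uniq (map key Gs).
  apply/negP => U.
  have := uniq_leq_size U (s2 := enum keyT) (fun x _ => mem_enum _ x).
  rewrite size_map -cardT => h. by move: sG; rewrite ltnNge h.
case/(uniqPn (key 0)): nu => i [j [ij js Hk]].
rewrite size_map in js.
have is_ : i < size Gs by apply: ltn_trans js.
rewrite !(nth_map 0) // in Hk.
have k12 : nth 0 Gs i < nth 0 Gs j.
  apply: (sorted_ltn_nth ltn_trans) => //.
  by apply: sorted_filter; [exact: ltn_trans | exact: iota_ltn_sorted].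
have m1 := mem_nth 0 is_; have m2 := mem_nth 0 js.
have [x1 [y1 [w1 [a1 a2 a3 a4 [a5 a6]]]]] := goodw _ m1.
have [x2 [y2 [w2 [b1 b2 b3 b4 [b5 b6]]]]] := goodw _ m2.
move: Hk; rewrite /key w1 w2 /= => [[K1 K2 K3]].
move: m1 m2; rewrite !mem_filter !mem_iota => /andP [na1 /andP [p1 _]] /andP [na2 _].
exact: (shortcut Esym (n := n) (q := q) (leqnn _) (leqnn _) p1 k12 a1 a2 b1 b2 a3 a4 a5 a6 b5 b6 na1 na2 K1 K2 K3).
Qed.
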